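(* Fix integers $k\ge 3$ and $r\ge 1$. For $n\ge 0$ let $c_n$ be the number of words on $[n]^r$ that avoid both $123$ and $1k(k-1)\cdots 2$. Then the sequence $(c_n)_{n\ge0}$ satisfies a linear recurrence with constant coefficients; equivalently, $\sum_{n\ge 0} c_n x^n$ is a rational function of $x$.
   Context: A word on $[n]^r$ is a word in which each letter $1,2,\dots,n$ appears exactly $r$ times and no other letter appears (for $r=1$ these are the permutations of $[n]$). A word $w_1\cdots w_m$ contains a pattern $p_1\cdots p_k$ if there are indices $i_1<\dots<i_k$ such that for all $r,s$: $w_{i_r}<w_{i_s}\iff p_r<p_s$ and $w_{i_r}>w_{i_s}\iff p_r>p_s$; otherwise it avoids it. The pattern $1k(k-1)\cdots 2$ is $1$ followed by $k,k-1,\dots,2$. *)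

(* Defs.v *)
From HB Require Import structures.
From mathcomp Require Import all_boot all_order all_algebra.
Set Implicit Arguments. Unset Strict Implicit. Unset Printing Implicit Defensive.

Definition is_word (n r : nat) (w : seq nat) : bool :=
  all (fun x => (0 < x) && (x <= n)) w &&
  all (fun i => count_mem i w == r) (iota 1 n).

Definition order_iso (u p : seq nat) : bool :=
  (size u == size p) &&
  [forall i : 'I_(size p), forall j : 'I_(size p),
     ((nth 0 u i < nth 0 u j) == (nth 0 p i < nth 0 p j)) &&
     ((nth 0 u i > nth 0 u j) == (nth 0 p i > nth 0 p j))].

Definition contains (w p : seq nat) : bool :=
  [exists m : (size w).-tuple bool, order_iso (mask m w) p].

Definition avoids (w p : seq nat) : bool := ~~ contains w p.

Definition pat123 : seq nat := [:: 1; 2; 3].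
Definition pat1k (k : nat) : seq nat := 1 :: rev (iota 2 k.-1).

(* c_n: number of words on [n]^r avoiding 123 and 1k(k-1)...2.
   Words of length n*r with letters in {0..n} are enumerated as tuples over 'I_n.+1. *)
Definition c_seq (k r n : nat) : nat :=
  #|[pred t : (n * r).-tuple 'I_n.+1 |
     let w := map (@nat_of_ord _) t in
     [&& is_word n r w, avoids w pat123 & avoids w (pat1k k)]]|.

(* Main.v *)
Require Import Defs.
From HB Require Import structures.
From mathcomp Require Import all_boot all_order all_algebra.
From mathcomp Require Import zify.
Set Implicit Arguments. Unset Strict Implicit. Unset Printing Implicit Defensive.

Definition inc (l : seq nat) : seq nat :=
  match l with [::] => [:: 1] | a :: l' => a.+1 :: l' end.

Fixpoint rs (v : seq nat) : seq nat :=
  match v with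
  | [::] => [::]
  | x :: t => match t with
              | [::] => [:: 1]
              | y :: _ => if x == y then inc (rs t) else if x < y then 1 :: rs t else [:: 1]
              end
  end.

Lemma rs0 : rs [::] = [::]. Proof. by []. Qed.
Lemma rs1 x : rs [:: x] = [:: 1]. Proof. by []. Qed.
Lemma rs2 x y t : rs (x :: y :: t) =
  if x == y then inc (rs (y :: t)) else if x < y then 1 :: rs (y :: t) else [:: 1].
Proof. by []. Qed.
Arguments rs : simpl never.

Fixpoint trunc (g : nat) (R : seq nat) {struct R} : seq nat :=
  match g with
  | 0 => [::]
  | g'.+1 => match R with
             | [::] => [::]
             | a :: R' => if g'.+1 <= a then [:: g'.+1] else a :: trunc (g'.+1 - a) R'
             end
  end.

Lemma trunc0 R : trunc 0 R = [::]. Proof. by case: R. Qed.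

Lemma rs_pos v : all (fun a => 0 < a) (rs v).
Proof.
elim: v => [|x t IH] //; case: t IH => [|y t] IH //.
rewrite rs2; case: eqP => _; last by case: ifP.
by case: (rs (y :: t)) IH => //= a l /andP[_ ->].
Qed.

Lemma rs_nil v : (rs v == [::]) = (v == [::]).
Proof.
case: v => [|x [|y t]] //; rewrite rs2.
by case: (x == y); [case: (rs _)|case: (x < y)].
Qed.

Lemma sumn_rs_size v : sumn (rs v) <= size v.
Proof.
elim: v => [|x t IH] //; case: t IH => [|y t] IH //.
rewrite /= in IH; rewrite rs2; case: eqP => _; last by case: ifP => _ /=; lia.
case: (rs (y :: t)) IH => //= a l; lia.
Qed.

Lemma sorted_take_rs u L : L <= size u -> sorted leq (take L u) = (L <= sumn (rs u)).
Proof.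
elim: u L => [|x t IH] L; first by case: L.
case: L => [|L] //.
case: t IH => [|y t] IH; first by case: L.
move=> HL; have HL' : L <= size (y :: t) by [].
have := IH _ HL'.
rewrite rs2.
case: L HL HL' => [|L] HL HL' IHL.
  case: eqP => _; first by move: (rs_pos (y :: t)); case: (rs (y :: t)).
  by case: ifP.
rewrite take_cons /= in IHL.
rewrite !take_cons /= IHL.
case: eqP => [->|Hne].
  by have := rs_pos (y :: t); case E: (rs (y :: t)) => [|a l] _ /=; rewrite leqnn /=; lia.
case Hxy: (x < y) => /=.
  rewrite ltnW //=; lia.
have -> : (x <= y) = false by apply/negbTE; move/eqP: Hne; lia.
by [].
Qed.

Lemma size_undup_rs s : sorted leq s -> size (undup s) = size (rs s).
Proof.
elim: s => [|x t IH] //; case: t IH => [|y t] IH //= Hs.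
move/andP: Hs => [Hxy Hs]; rewrite rs2.
have IH' := IH Hs.
case: eqP => [Exy|Hne].
  rewrite Exy inE eqxx /= IH'.
  by have := rs_nil (y :: t); case: (rs (y :: t)).
have Hlt : x < y by move/eqP: Hne; lia.
rewrite Hlt.
have Hall : all (leq y) t by apply: (order_path_min leq_trans Hs).
have Hn : x \notin y :: t.
  rewrite inE negb_or; apply/andP; split; first by apply/eqP.
  by apply/negP => Hx; have := allP Hall x Hx; lia.
by rewrite (negbTE Hn) /= IH'.
Qed.

Lemma inc_trunc g R : 0 < g -> R != [::] -> inc (trunc g R) = trunc g.+1 (inc R).
Proof.
case: g => [|g] // _; case: R => [|a R] // _ /=.
case: ifP => H; first by rewrite ltnS H.
by rewrite ltnS H subSS.
Qed.

Lemma rs_take u L : L <= sumn (rs u) -> rs (take L u) = trunc L (rs u).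
Proof.
elim: u L => [|x t IH] L; first by rewrite leqn0 => /eqP ->.
case: L => [|L]; first by move=> _; rewrite take0 rs0 trunc0.
case: t IH => [|y t] IH.
  by case: L.
case: L => [|L] HL.
  have -> : take 1 [:: x, y & t] = [:: x] by []; rewrite rs1.
  have := rs_pos (x :: y :: t); move: HL.
  by case: (rs (x :: y :: t)) => [|a l] //= _ /andP[Ha _]; rewrite Ha.
rewrite take_cons take_cons rs2.
move: HL; rewrite rs2.
case: eqP => [Exy|Hne].
  have Hne0 : rs (y :: t) != [::] by rewrite rs_nil.
  have := rs_pos (y :: t).
  case E: (rs (y :: t)) Hne0 => [|a l] // _ Hp HL.
  have -> : y :: take L t = take L.+1 (y :: t) by [].
  rewrite IH; last by rewrite E /=; move: HL => /=; lia.
  by rewrite E (@inc_trunc L.+1 (a :: l)).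
case Hxy: (x < y) => HL //=.
have -> : y :: take L t = take L.+1 (y :: t) by [].
rewrite IH; last by move: HL => /=; lia.
by rewrite /= subn1.
Qed.

Lemma size_trunc R L j : all (fun a => 0 < a) R -> L <= sumn R ->
  (size (trunc L R) <= j) = (L <= sumn (take j R)).
Proof.
elim: R L j => [|a R IH] L j.
  by move=> _; rewrite leqn0 => /eqP ->.
move=> /= /andP[Ha HR] HL.
case: L HL => [|L] HL //=.
case: j => [|j]; first by case: ifP.
case: ifP => H /=.
  by apply/esym; apply: (leq_trans H); apply: leq_addr.
rewrite ltnS IH //; last by move/negbT: H; lia.
by move/negbT: H; lia.
Qed.

Lemma trunc_take R L j : L <= sumn (take j R) -> trunc L R = trunc L (take j R).
Proof.
elim: R L j => [|a R IH] L j; first by [].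
case: j => [|j] /=; first by rewrite leqn0 => /eqP ->.
case: L => [|L] //= HL.
case: ifP => H //.
by rewrite (IH _ j) //; move/negbT: H; lia.
Qed.

Lemma rs_ones n s : (if s is y :: _ then 1 < y else true) ->
  rs (nseq n.+1 1 ++ s) = n.+1 :: rs s.
Proof.
move=> Hs; elim: n => [|n IH].
  case: s Hs => [|y s] //= Hy.
  by rewrite rs2; case: eqP => [E|_]; [move: Hy; rewrite -E | rewrite Hy].
by rewrite /= rs2 eqxx -/(nseq n.+1 1 ++ s) IH.
Qed.

Lemma rs_cut x s y z : y < last x s -> rs ((x :: s) ++ y :: z) = rs (x :: s).
Proof.
elim: s x => [|x2 s IH] x /= Hy.
  rewrite rs2 rs1; case: eqP => [E|_]; first by move: Hy; rewrite E ltnn.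
  by have -> : (x < y) = false by apply/negbTE; lia.
by rewrite rs2 [in RHS]rs2 -cat_cons IH.
Qed.

Definition Tk (k : nat) (u : seq nat) : nat := sumn (take (k - 2) (rs u)).
Definition good (k : nat) (s : seq nat) : bool := sorted leq s && (size (undup s) <= k - 2).

Lemma sumn_take j R : sumn (take j R) <= sumn R.
Proof. by rewrite -{2}(cat_take_drop j R) sumn_cat leq_addr. Qed.

Lemma Tk_size k u : Tk k u <= size u.
Proof. exact: leq_trans (sumn_take _ _) (sumn_rs_size u). Qed.

Lemma good_T k u L : L <= size u -> good k (take L u) = (L <= Tk k u).
Proof.
move=> HL; rewrite /good /Tk sorted_take_rs //.
case: (leqP L (sumn (rs u))) => H /=.
  rewrite size_undup_rs; last by rewrite sorted_take_rs.
  by rewrite rs_take // size_trunc // rs_pos.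
apply/esym/negbTE; rewrite -ltnNge.
exact: leq_ltn_trans (sumn_take _ _) H.
Qed.

Fixpoint shuf (b : seq bool) (s : seq nat) : seq nat :=
  match b with
  | [::] => s
  | c :: b' => if c then 1 :: shuf b' s
               else match s with [::] => shuf b' [::] | x :: s' => x :: shuf b' s' end
  end.

Definition newv (u : seq nat) (L : nat) (b : seq bool) : seq nat :=
  shuf b (take L u) ++ 1 :: drop L u.

Fixpoint leadc (c : bool) (b : seq bool) : nat :=
  if b is x :: b' then (if x == c then (leadc c b').+1 else 0) else 0.

Lemma leadcE c b : b = nseq (leadc c b) c ++ drop (leadc c b) b.
Proof. by elim: b => [|x b IH] //=; case: eqP => [->|_] //=; rewrite -IH. Qed.

Lemma leadc_next c b : if drop (leadc c b) b is x :: _ then x != c else true.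
Proof. by elim: b => [|x b IH] //=; case: eqP => [->|/eqP] //=. Qed.

Lemma shuf_ones t b s : shuf (nseq t true ++ b) s = nseq t 1 ++ shuf b s.
Proof. by elim: t => //= t ->. Qed.

Lemma shuf_falses g b s : g <= size s ->
  shuf (nseq g false ++ b) s = take g s ++ shuf b (drop g s).
Proof.
elim: g s => [|g IH] [|x s] //= Hg.
by rewrite IH.
Qed.

Lemma filter_shuf b s : all (fun x => x != 1) s -> count negb b = size s ->
  filter (fun x => x != 1) (shuf b s) = s.
Proof.
elim: b s => [|c b IH] s Hs /=.
  by move=> /esym/eqP; rewrite size_eq0 => /eqP ->.
case: c => /=; first by apply: IH.
case: s Hs => [|x s] //= /andP[Hx Hs] [Hc].
by rewrite Hx IH.
Qed.

Lemma map_shuf b s : all (fun x => x != 1) s -> count negb b = size s ->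
  map (fun x => x == 1) (shuf b s) = b.
Proof.
elim: b s => [|c b IH] s Hs /=.
  by move=> /esym/eqP; rewrite size_eq0 => /eqP ->.
case: c => /=; first by move=> H; rewrite IH.
case: s Hs => [|x s] //= /andP[Hx Hs] [Hc].
by rewrite (negbTE Hx) IH.
Qed.

Lemma shuf_map v : shuf (map (fun x => x == 1) v) (filter (fun x => x != 1) v) = v.
Proof.
elim: v => [|x v IH] //=.
by case: eqP => [->|_] /=; rewrite IH.
Qed.

Lemma perm_shuf b s : count negb b = size s ->
  perm_eq (shuf b s) (nseq (count id b) 1 ++ s).
Proof.
elim: b s => [|c b IH] s /=.
  by move=> /esym/eqP; rewrite size_eq0 => /eqP ->.
case: c => /=; first by move=> H; rewrite perm_cons IH.
case: s => [|x s] //= [Hc].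
rewrite add0n.
apply: (@perm_trans _ (x :: (nseq (count id b) 1 ++ s))); first by rewrite perm_cons IH.
by rewrite -cat1s perm_catCA.
Qed.

Definition stk (k : nat) (v : seq nat) : seq nat := take (k - 2) (rs v).

Definition newst (k : nat) (b : seq bool) (S : seq nat) : seq nat :=
  let t := leadc true b in
  let g := leadc false (drop t b) in
  if g == 0 then take (k - 2) (t.+1 :: S)
  else take (k - 2) (if t == 0 then trunc g S else t :: trunc g S).

Lemma nseq_cons1 t (x : nat) u : nseq t x ++ x :: u = nseq t.+1 x ++ u.
Proof. by elim: t => //= t ->. Qed.

Lemma st_newv k u L b : 2 < k -> all (fun x => 1 < x) u -> count negb b = L ->
  L <= Tk k u -> stk k (newv u L b) = newst k b (stk k u).
Proof.
move=> Hk Hu Hb HL.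
have HLs : L <= size u := leq_trans HL (Tk_size k u).
have HLr : L <= sumn (rs u) := leq_trans HL (sumn_take _ _).
rewrite /newst.
set t := leadc true b; set b1 := drop t b.
have Eb : b = nseq t true ++ b1 := leadcE true b.
have Hb1 := leadc_next true b; rewrite -/t -/b1 in Hb1.
set g := leadc false b1; set b2 := drop g b1.
have Eb1 : b1 = nseq g false ++ b2 := leadcE false b1.
have Hb2 := leadc_next false b1; rewrite -/g -/b2 in Hb2.
have HcL : L = g + count negb b2.
  by rewrite -Hb Eb count_cat Eb1 count_cat !count_nseq /=; lia.
rewrite /newv Eb shuf_ones.
case: eqP => Hg0.
  have Eb1' : b1 = [::].
    move: Hb1 Hb2; rewrite /b2 Hg0 drop0.
    by case: (b1) => [|[] ?].
  have HL0 : L = 0 by rewrite HcL /b2 Hg0 drop0 Eb1'.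
  rewrite Eb1' HL0 take0 drop0 /= -catA /= nseq_cons1 /stk rs_ones; last first.
    by case: (u) Hu => [|x ?] //= /andP[].
  case Ek: (k - 2) => [|j]; first by lia.
  by rewrite /= take_takel.
have Hgl : g <= L by lia.
rewrite Eb1 shuf_falses; last by rewrite size_takel.
rewrite take_takel //.
have [z Ez] : exists z, shuf b2 (drop g (take L u)) ++ 1 :: drop L u = 1 :: z.
  case: (b2) Hb2 HcL => [|c b3].
    move=> _ /= HLg; rewrite HLg addn0 in HLs *.
    rewrite drop_oversize ?size_takel //=.
    by exists (drop g u).
  by case: c => //= _ _; exists (shuf b3 (drop g (take L u)) ++ 1 :: drop L u).
rewrite -!catA Ez.
have Hallg : all (fun x => 1 < x) (take g u).
  by apply/allP => x /mem_take Hx; exact: (allP Hu x Hx).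
have Hsz : size (take g u) = g by rewrite size_takel //; lia.
case Etg: (take g u) Hallg Hsz => [|x s'] Hallg Hsz; first by move/eqP: Hg0; rewrite -Hsz.
have Hgr : g <= sumn (rs u) by lia.
have HgT : g <= sumn (take (k - 2) (rs u)) by move: HL; rewrite /Tk; lia.
have Hcut : rs ((x :: s') ++ 1 :: z) = rs (x :: s').
  apply: rs_cut; apply: (allP Hallg); exact: mem_last.
rewrite /stk.
case: (t) => [|t'] /=.
  by rewrite Hcut -Etg rs_take // -trunc_take.
rewrite -cat_cons rs_ones; last by move: Hallg => /= /andP[].
by rewrite Hcut -Etg rs_take // -trunc_take.
Qed.

Lemma containsP w p : reflect (exists s, subseq s w /\ order_iso s p) (contains w p).
Proof.
apply: (iffP existsP) => [[m Hm] | [s [Hs Hiso]]].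
  by exists (mask m w); split; [exact: mask_subseq | done].
move/subseqP: Hs => [m Hsz Es].
have Hsz' : size m == size w by apply/eqP.
by exists (Tuple Hsz'); rewrite /= -Es.
Qed.

Lemma cont_rev v p : contains (rev v) p <-> exists s, subseq s v /\ order_iso (rev s) p.
Proof.
split.
  move/containsP => [s [Hs Hi]]; exists (rev s); rewrite revK; split => //.
  by rewrite -subseq_rev revK.
move=> [s [Hs Hi]]; apply/containsP; exists (rev s); split => //.
by rewrite subseq_rev.
Qed.

Lemma isoP t p i j : order_iso t p -> i < size p -> j < size p ->
  (nth 0 t i < nth 0 t j) = (nth 0 p i < nth 0 p j).
Proof.
move=> /andP[_ /forallP H] Hi Hj.
by have /forallP /(_ (Ordinal Hj)) /andP [/eqP -> _] := H (Ordinal Hi).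
Qed.

Lemma isoI t p : size t = size p ->
  (forall i j, i < size p -> j < size p -> (nth 0 t i < nth 0 t j) = (nth 0 p i < nth 0 p j)) ->
  order_iso t p.
Proof.
move=> Hs H; rewrite /order_iso Hs eqxx /=.
apply/forallP => i; apply/forallP => j.
by rewrite !H //; apply/andP.
Qed.

Lemma iso_succ s p : order_iso (map succn s) p = order_iso s p.
Proof.
rewrite /order_iso size_map; case E: (size s == size p) => //=.
apply: eq_forallb => i; apply: eq_forallb => j.
have Hi : i < size s by rewrite (eqP E).
have Hj : j < size s by rewrite (eqP E).
by rewrite !(nth_map 0) // !ltnS.
Qed.

Lemma contains_succ w p : contains (map succn w) p = contains w p.
Proof.
apply/containsP/containsP => [[s [Hs Hi]] | [s [Hs Hi]]].
  move/subseqP: Hs => [m Hm Es]; rewrite -map_mask in Es.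
  exists (mask m w); split; first exact: mask_subseq.
  by rewrite -iso_succ -Es.
by exists (map succn s); rewrite map_subseq // iso_succ.
Qed.

Lemma sorted_ltn_mono t i j : sorted ltn t -> i < size t -> j < size t ->
  (nth 0 t i < nth 0 t j) = (i < j).
Proof.
move=> Hs Hi Hj.
have Hm := sorted_ltn_nth ltn_trans 0 Hs.
case: (ltngtP i j) => H.
- by apply: Hm.
- by apply/negbTE; rewrite -leqNgt; apply: ltnW; apply: Hm.
- by rewrite H ltnn.
Qed.

Definition shp (t : seq nat) : bool :=
  if t is x :: xs then sorted gtn xs && all (fun z => x < z) xs else false.

Lemma shp_lt t i j : shp t -> i < size t -> j < size t ->
  (nth 0 t i < nth 0 t j) = ((i == 0) && (j != 0)) || ((0 < j) && (j < i)).
Proof.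
case: t => [|x xs] //= /andP[Hs Ha] Hi Hj.
have Hm := sorted_ltn_nth (fun _ _ _ H1 H2 => ltn_trans H2 H1) 0 Hs.
case: i Hi => [|i] Hi; case: j Hj => [|j] Hj //=.
- by rewrite ltnn.
- by rewrite (allP Ha) // mem_nth.
- by apply/negbTE; rewrite -leqNgt ltnW // (allP Ha) // mem_nth.
rewrite !ltnS in Hi Hj *.
case: (ltngtP i j) => H.
- by apply/negbTE; rewrite -leqNgt ltnW //; apply: Hm.
- by apply: Hm.
- by rewrite H ltnn.
Qed.

Lemma shp_iso t p : size t = size p -> shp t -> shp p -> order_iso t p.
Proof.
move=> Hs Ht Hp; apply: isoI => // i j Hi Hj.
by rewrite !shp_lt // Hs.
Qed.

Lemma iso_shp t p : order_iso t p -> shp p -> shp t.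
Proof.
move=> Hi Hp.
have Hsz : size t = size p by move/andP: Hi => [/eqP].
case: t Hi Hsz => [|x xs] Hi Hsz; first by case: p Hp Hsz Hi.
apply/andP; split.
  apply/(sortedP 0) => i Hi1.
  have Hs2 : i.+2 < size p by rewrite -Hsz /=; lia.
  have Hs1 : i.+1 < size p by lia.
  have := @isoP _ _ i.+2 i.+1 Hi Hs2 Hs1; rewrite (shp_lt Hp) //= => ->; lia.
apply/(all_nthP 0) => j Hj.
have Hs2 : j.+1 < size p by rewrite -Hsz /=; lia.
have Hs0 : 0 < size p by lia.
by have := @isoP _ _ 0 j.+1 Hi Hs0 Hs2; rewrite (shp_lt Hp) //= => ->.
Qed.

Lemma shp_pat1k k : 1 < k -> shp (pat1k k).
Proof.
move=> Hk; rewrite /pat1k /=; apply/andP; split.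
  by rewrite rev_sorted; apply: iota_ltn_sorted.
by rewrite all_rev; apply/allP => z; rewrite mem_iota; lia.
Qed.

Lemma size_pat1k k : 0 < k -> size (pat1k k) = k.
Proof. by move=> Hk; rewrite /pat1k /= size_rev size_iota; lia. Qed.

Definition bad3 (v : seq nat) : Prop :=
  exists a b c, [/\ a < b, b < c & subseq [:: c; b; a] v].

Definition badk (k : nat) (v : seq nat) : Prop :=
  exists a zs, [/\ size zs = k.-1, sorted ltn zs, all (fun z => a < z) zs & subseq (rcons zs a) v].

Lemma cont3 v : contains (rev v) pat123 <-> bad3 v.
Proof.
rewrite cont_rev; split.
  move=> [s [Hs Hi]].
  have Hsz : size (rev s) = 3 by move/andP: Hi => [/eqP].
  have Es : s = rev (rev s) by rewrite revK.
  rewrite Es in Hs; move: (rev s) Hsz Hs Hi => t.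
  case: t => [|a [|b [|c [|? ?]]]] //= _ Hs Hi.
  exists a, b, c; split.
  - by have := @isoP _ _ 0 1 Hi isT isT => /= ->.
  - by have := @isoP _ _ 1 2 Hi isT isT => /= ->.
  - by move: Hs; rewrite /rev /=.
move=> [a [b [c [Hab Hbc Hs]]]]; exists [:: c; b; a]; split => //.
apply: isoI => // i j Hi Hj.
rewrite (@sorted_ltn_mono [:: a; b; c]) //=; last by apply/andP; split => //; rewrite Hbc.
by rewrite (@sorted_ltn_mono [:: 1; 2; 3]).
Qed.

Lemma contk k v : 1 < k -> contains (rev v) (pat1k k) <-> badk k v.
Proof.
move=> Hk; rewrite cont_rev; split.
  move=> [s [Hs Hi]].
  have Hsz : size (rev s) = k by move/andP: Hi => [/eqP ->]; rewrite size_pat1k //; lia.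
  have := iso_shp Hi (shp_pat1k Hk).
  have Es : s = rev (rev s) by rewrite revK.
  rewrite Es in Hs; move: (rev s) Hsz Hs => t.
  case: t => [|a ys] //= Hsz Hs /andP[Hsort Hall].
  exists a, (rev ys); split.
  - by rewrite size_rev; lia.
  - by rewrite rev_sorted.
  - by rewrite all_rev.
  - by move: Hs; rewrite rev_cons.
move=> [a [zs [Hsz Hsort Hall Hs]]]; exists (rcons zs a); split => //.
apply: shp_iso; last exact: shp_pat1k.
  by rewrite size_rev size_rcons size_pat1k; lia.
by rewrite rev_rcons /= all_rev Hall andbT rev_sorted.
Qed.

Lemma subseq_rcons_split (s : seq nat) x p q : x \notin q ->
  subseq (rcons s x) (p ++ x :: q) -> subseq s p.
Proof.
move=> Hq H.
rewrite -subseq_rev rev_rcons rev_cat rev_cons -cats1 -catA /= in H.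
rewrite -subseq_rev.
have Hq' : x \notin rev q by rewrite mem_rev.
elim: (rev q) Hq' H => [|y t IH] /=.
  by move=> _; rewrite eqxx.
rewrite inE negb_or => /andP[Hxy Ht] H.
by apply: IH => //; move: H; rewrite /= (negbTE Hxy).
Qed.

Lemma Srt s : (forall c b, subseq [:: c; b] s -> c <= b) -> sorted leq s.
Proof.
elim: s => [|x t IH] //; case: t IH => [|y t] IH H //=.
apply/andP; split.
  by apply: H; rewrite /= eqxx /= eqxx sub0seq.
apply: IH => c b Hs; apply: H.
exact: subseq_trans Hs (subseq_cons _ _).
Qed.


Lemma all_drop_take (P : pred nat) s L : all P s -> all P (take L s) && all P (drop L s).
Proof. by move=> H; rewrite -all_cat cat_take_drop. Qed.

Lemma filter_shuf_take u L b : all (fun x => 1 < x) u -> count negb b = L -> L <= size u ->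
  filter (fun x => x != 1) (shuf b (take L u)) = take L u.
Proof.
move=> Hu Hb HL.
have Hu' : all (fun x => x != 1) u by apply: sub_all Hu => x; lia.
apply: filter_shuf; last by rewrite size_takel.
by case/andP: (all_drop_take L Hu') => ->.
Qed.

Lemma filter_newv u L b : all (fun x => 1 < x) u -> count negb b = L -> L <= size u ->
  filter (fun x => x != 1) (newv u L b) = u.
Proof.
move=> Hu Hb HL.
have Hu' : all (fun x => x != 1) u by apply: sub_all Hu => x; lia.
rewrite /newv filter_cat filter_shuf_take //=.
case/andP: (all_drop_take L Hu') => _ /all_filterP ->.
by rewrite cat_take_drop.
Qed.

Lemma mem_newv u L b x : all (fun x => 1 < x) u -> count negb b = L -> L <= size u ->
  x \in newv u L b -> (x == 1) || (1 < x).
Proof.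
move=> Hu Hb HL.
have Hall : all (fun x => (x == 1) || (1 < x)) (newv u L b).
  rewrite /newv all_cat /=.
  rewrite (perm_all _ (perm_shuf _)); last by rewrite size_takel.
  rewrite all_cat -andbA; apply/and3P; split.
  - by apply/allP => y /nseqP [-> _]; rewrite eqxx.
  - have Hu2 : all (fun x => (x == 1) || (1 < x)) u by apply: sub_all Hu => y Hy; rewrite Hy orbT.
    by case/andP: (all_drop_take L Hu2).
  - have Hu2 : all (fun x => (x == 1) || (1 < x)) u by apply: sub_all Hu => y Hy; rewrite Hy orbT.
    by case/andP: (all_drop_take L Hu2).
by move/(allP Hall).
Qed.

Lemma K1 k u L b : 2 < k -> all (fun x => 1 < x) u -> count negb b = L -> L <= size u ->
  ~ bad3 u -> ~ badk k u -> good k (take L u) ->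
  ~ bad3 (newv u L b) /\ ~ badk k (newv u L b).
Proof.
move=> Hk Hu Hb HL N3 Nk /andP[Hsort Hund].
have Hnd : 1 \notin drop L u.
  by apply/negP => /mem_drop H; have := allP Hu 1 H.
have Hfilt := filter_newv Hu Hb HL.
have Hfp := filter_shuf_take Hu Hb HL.
split.
  move=> [a [b' [c [Hab Hbc Hs]]]].
  case: (eqVneq a 1) => Ha.
    subst a.
    have Hs' : subseq [:: c; b'] (shuf b (take L u)) := @subseq_rcons_split [:: c; b'] 1 (shuf b (take L u)) _ Hnd Hs.
    have Hs2 : subseq [:: c; b'] (take L u).
      rewrite -Hfp subseq_filter Hs' andbT /=; apply/andP; split; apply/eqP; lia.
    have := subseq_sorted leq_trans Hs2 Hsort; rewrite /= andbT; lia.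
  have Ha1 : 1 < a.
    have Hm : a \in newv u L b by apply: (mem_subseq Hs); rewrite !inE eqxx !orbT.
    by have := mem_newv Hu Hb HL Hm; rewrite (negbTE Ha).
  apply: N3; exists a, b', c; split => //.
  rewrite -Hfilt subseq_filter Hs andbT /=.
  apply/and3P; split; apply/eqP; lia.
move=> [a [zs [Hsz Hzs Hall Hs]]].
case: (eqVneq a 1) => Ha.
  subst a.
  have Hs' := @subseq_rcons_split zs 1 (shuf b (take L u)) _ Hnd Hs.
  have Hne1 : all (fun x => x != 1) zs by apply: sub_all Hall => z; lia.
  have Hs2 : subseq zs (take L u) by rewrite -Hfp subseq_filter Hne1 Hs'.
  have Huq : uniq zs by move: Hzs; rewrite ltn_sorted_uniq_leq => /andP[].
  have Hsub : {subset zs <= undup (take L u)}.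
    by move=> z Hz; rewrite mem_undup; exact: (mem_subseq Hs2 Hz).
  have := uniq_leq_size Huq Hsub; rewrite Hsz; lia.
have Ha1 : 1 < a.
  have Hm : a \in newv u L b by apply: (mem_subseq Hs); rewrite mem_rcons inE eqxx.
  by have := mem_newv Hu Hb HL Hm; rewrite (negbTE Ha).
apply: Nk; exists a, zs; split => //.
rewrite -Hfilt subseq_filter Hs andbT all_rcons Ha /=.
by apply: sub_all Hall => z; lia.
Qed.

Lemma K2 k u L b : 2 < k -> all (fun x => 1 < x) u -> count negb b = L -> L <= size u ->
  ~ bad3 (newv u L b) -> ~ badk k (newv u L b) ->
  [/\ ~ bad3 u, ~ badk k u & good k (take L u)].
Proof.
move=> Hk Hu Hb HL N3 Nk.
have Hfilt := filter_newv Hu Hb HL.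
have Hfp := filter_shuf_take Hu Hb HL.
have Hsub : subseq u (newv u L b) by rewrite -[X in subseq X _]Hfilt filter_subseq.
have Hpu : subseq (take L u) (shuf b (take L u)).
  by rewrite -[X in subseq X _]Hfp filter_subseq.
have Hall_t : all (fun x => 1 < x) (take L u) by case/andP: (all_drop_take L Hu).
have H1 : subseq [:: 1] (1 :: drop L u) by rewrite /= ?eqxx ?sub0seq.
split.
- move=> [a [b' [c [? ? Hs]]]]; apply: N3; exists a, b', c; split => //.
  exact: subseq_trans Hs Hsub.
- move=> [a [zs [? ? ? Hs]]]; apply: Nk; exists a, zs; split => //.
  exact: subseq_trans Hs Hsub.
have Hsort : sorted leq (take L u).
  apply: Srt => c b' Hs; rewrite leqNgt; apply/negP => Hlt; apply: N3.
  exists 1, b', c; split => //.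
    apply: (allP Hall_t); apply: (mem_subseq Hs); by rewrite !inE eqxx orbT.
  rewrite /newv -[[:: c; b'; 1]]/([:: c; b'] ++ [:: 1]).
  by apply: cat_subseq => //; exact: subseq_trans Hs Hpu.
rewrite /good Hsort /= leqNgt; apply/negP => Hgt; apply: Nk.
set s := take L u.
exists 1, (take k.-1 (undup s)); split.
- rewrite size_takel // /s; lia.
- apply: take_sorted; rewrite ltn_sorted_uniq_leq undup_uniq /=.
  exact: (subseq_sorted leq_trans (undup_subseq _) Hsort).
- apply/allP => z /mem_take; rewrite mem_undup => Hz; exact: (allP Hall_t).
rewrite -cats1 /newv; apply: cat_subseq => //.
apply: subseq_trans (take_subseq _ _) _.
exact: subseq_trans (undup_subseq s) Hpu.
Qed.

Lemma is_word_perm n r s1 s2 : perm_eq s1 s2 -> is_word n r s1 = is_word n r s2.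
Proof.
move=> H; rewrite /is_word (perm_all _ H); congr (_ && _).
by apply: eq_all => i; move/permP: H => ->.
Qed.

Lemma is_word_rev n r v : is_word n r (rev v) = is_word n r v.
Proof. by apply: is_word_perm; rewrite perm_rev. Qed.

Lemma perm_newv u L b : count negb b = L -> L <= size u ->
  perm_eq (newv u L b) (nseq (count id b).+1 1 ++ u).
Proof.
move=> Hb HL; rewrite /newv.
apply: (@perm_trans _ ((nseq (count id b) 1 ++ take L u) ++ 1 :: drop L u)).
  by rewrite perm_cat2r perm_shuf // size_takel.
rewrite -catA -nseq_cons1 perm_cat2l.
rewrite -[X in perm_eq _ (1 :: X)](cat_take_drop L u).
by rewrite -cat1s perm_catCA.
Qed.

Lemma allpos vp n : all (fun x => 0 < x <= n) vp =
  all (fun x => x <= n) vp && (count_mem 0 vp == 0).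
Proof.
elim: vp => [|x vp IH] //=; rewrite IH.
by case: x => [|x] /=; rewrite ?add1n ?andbF // add0n andbA.
Qed.

Lemma is_word_succ n r vp : 0 < r ->
  is_word n.+1 r (nseq r 1 ++ map succn vp) = is_word n r vp.
Proof.
move=> Hr; rewrite /is_word all_cat.
have -> : all (fun x => 0 < x <= n.+1) (nseq r 1) by apply/allP => x /nseqP [-> _].
have E : iota 1 n.+1 = 1 :: map succn (iota 1 n) by rewrite /= (iotaDl 1 1).
rewrite E all_map /= all_map count_cat count_map count_nseq /= mul1n.
have -> : count (preim succn (pred1 1)) vp = count_mem 0 vp by apply: eq_count.
rewrite allpos.
have -> : all (preim succn (fun i => count_mem i (nseq r 1 ++ [seq x.+1 | x <- vp]) == r)) (iota 1 n)
   = all (fun i => count_mem i vp == r) (iota 1 n).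
  apply: eq_in_all => i; rewrite mem_iota => /andP[Hi _] /=.
  rewrite count_cat count_map count_nseq /=.
  have -> : count (preim succn (pred1 i.+1)) vp = count_mem i vp by apply: eq_count.
  have -> : (1 == i.+1) = false by case: i Hi.
  by rewrite mul0n add0n.
have -> : all (preim succn (fun x => 0 < x <= n.+1)) vp = all (fun x => x <= n) vp.
  by apply: eq_all => x /=.
have -> : (r + count_mem 0 vp == r) = (count_mem 0 vp == 0) by rewrite -{2}(addn0 r) eqn_add2l.
by rewrite andbA.
Qed.

Lemma rs_succ v : rs (map succn v) = rs v.
Proof.
elim: v => [|x t IH] //; case: t IH => [|y t] IH //.
by rewrite map_cons map_cons rs2 -map_cons IH eqSS ltnS rs2.
Qed.

Lemma Tk_succ k v : Tk k (map succn v) = Tk k v.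
Proof. by rewrite /Tk rs_succ. Qed.

Lemma stk_succ k v : stk k (map succn v) = stk k v.
Proof. by rewrite /stk rs_succ. Qed.

Lemma bad3_succ v : bad3 (map succn v) <-> bad3 v.
Proof. by rewrite -!cont3 -map_rev contains_succ. Qed.

Lemma badk_succ k v : 1 < k -> badk k (map succn v) <-> badk k v.
Proof. by move=> Hk; rewrite -!(contk _ Hk) -map_rev contains_succ. Qed.

Definition validw n r k (w : seq nat) : bool :=
  [&& is_word n r w, avoids w pat123 & avoids w (pat1k k)].

Lemma validw_rev n r k v : 1 < k ->
  validw n r k (rev v) <-> [/\ is_word n r v, ~ bad3 v & ~ badk k v].
Proof.
move=> Hk; rewrite /validw /avoids is_word_rev; split.
  move=> /and3P [H1 H2 H3]; split => //.
    by move/cont3 => H; move: H2; rewrite H.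
  by move/(contk _ Hk) => H; move: H3; rewrite H.
move=> [H1 H2 H3]; rewrite H1 /=; apply/andP; split; apply/negP.
  by move/cont3.
by move/(contk _ Hk).
Qed.

Lemma is_word_pos n r v : is_word n r v -> all (fun x => 0 < x) v.
Proof. by move=> /andP[H _]; apply: sub_all H => x /andP[]. Qed.

Lemma step_sound n r k vp L b : 2 < k -> 0 < r -> validw n r k (rev vp) ->
  count id b = r.-1 -> count negb b = L -> L <= Tk k vp ->
  validw n.+1 r k (rev (newv (map succn vp) L b)).
Proof.
move=> Hk Hr /(validw_rev _ _ _ (ltnW Hk)) [Hw N3 Nk] Hid Hb HL.
have Hpos := is_word_pos Hw.
have Hu : all (fun x => 1 < x) (map succn vp) by rewrite all_map; apply: sub_all Hpos.
have HLu : L <= Tk k (map succn vp) by rewrite Tk_succ.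
have HLs : L <= size (map succn vp) := leq_trans HLu (Tk_size k _).
have N3' : ~ bad3 (map succn vp) by move/bad3_succ.
have Nk' : ~ badk k (map succn vp) by move/(badk_succ _ (ltnW Hk)).
have Hg : good k (take L (map succn vp)) by rewrite good_T.
have [N3'' Nk''] := K1 Hk Hu Hb HLs N3' Nk' Hg.
apply/validw_rev; first exact: ltnW.
split => //.
by rewrite (is_word_perm _ _ (perm_newv Hb HLs)) Hid prednK // is_word_succ.
Qed.

Lemma split_last (x : nat) v : x \in v -> exists v1 v2, v = v1 ++ x :: v2 /\ x \notin v2.
Proof.
elim: v => [|y t IH] //; rewrite inE.
case Ht: (x \in t).
  by move=> _; have [v1 [v2 [E H]]] := IH Ht; exists (y :: v1), v2; rewrite E.
move=> /orP [/eqP Exy|Hx]; last by rewrite Hx in Ht.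
by exists [::], t; rewrite -Exy Ht.
Qed.

Lemma step_complete n r k v : 2 < k -> 0 < r -> validw n.+1 r k (rev v) ->
  exists vp L b, [/\ v = newv (map succn vp) L b, validw n r k (rev vp),
    count id b = r.-1, count negb b = L & L <= Tk k vp].
Proof.
move=> Hk Hr /(validw_rev _ _ _ (ltnW Hk)) [Hw N3 Nk].
have Hc1 : count_mem 1 v = r.
  move: Hw => /andP[_ /allP H]; apply/eqP; apply: H; rewrite mem_iota; lia.
have H1 : 1 \in v by rewrite -has_pred1 has_count Hc1.
have [v1 [v2 [Ev H2]]] := split_last H1.
have Hpos := is_word_pos Hw.
set f := filter (fun x => x != 1) v.
set vp := map predn f.
have Hf : all (fun x => 1 < x) f.
  apply/allP => x; rewrite mem_filter => /andP [Hx1 Hxv].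
  have := allP Hpos x Hxv; move/eqP: Hx1; lia.
have Eu : map succn vp = f.
  rewrite /vp -map_comp; apply: map_id_in => x Hx /=.
  by rewrite prednK //; have := allP Hf x Hx; lia.
have Hv2 : all (fun x => x != 1) v2.
  by apply/allP => x Hx; apply/eqP => E; move: H2; rewrite -E Hx.
have Ef : f = filter (fun x => x != 1) v1 ++ v2.
  by rewrite /f Ev filter_cat /=; move/all_filterP: Hv2 => ->.
set L := size (filter (fun x => x != 1) v1).
set b := map (fun x => x == 1) v1.
have Hnewv : newv (map succn vp) L b = v.
  by rewrite Eu /newv Ef take_size_cat // drop_size_cat // shuf_map -Ev.
have Hb : count negb b = L.
  by rewrite /b /L count_map size_filter; apply: eq_count.
have Hid : count id b = r.-1.
  have : count_mem 1 v1 + (1 + count_mem 1 v2) = r by rewrite -Hc1 Ev count_cat /=.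
  move/count_memPn: H2 => ->; rewrite addn0 => <-.
  by rewrite addn1 /b count_map /=; apply: eq_count => x /=; rewrite eq_sym.
have Hu : all (fun x => 1 < x) (map succn vp) by rewrite Eu.
have HLs : L <= size (map succn vp) by rewrite Eu Ef size_cat -/L leq_addr.
have N3' : ~ bad3 (newv (map succn vp) L b) by rewrite Hnewv.
have Nk' : ~ badk k (newv (map succn vp) L b) by rewrite Hnewv.
have [N3u Nku Hg] := K2 Hk Hu Hb HLs N3' Nk'.
exists vp, L, b; split => //.
  apply/validw_rev; first exact: ltnW.
  split.
  - have := is_word_perm n.+1 r (perm_newv Hb HLs).
    by rewrite Hnewv Hid prednK // is_word_succ // => <-.
  - by move/bad3_succ.
  - by move/(badk_succ _ (ltnW Hk)).
by rewrite -Tk_succ -good_T.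
Qed.

Fixpoint allb (n : nat) : seq (seq bool) :=
  if n is n'.+1 then map (cons true) (allb n') ++ map (cons false) (allb n') else [:: [::]].

Lemma mem_allb n s : (s \in allb n) = (size s == n).
Proof.
elim: n s => [|n IH] [|c s] //=.
- by rewrite mem_cat; apply/negbTE; rewrite negb_or; apply/andP; split;
    apply/mapP; case=> ? _ E; discriminate E.
- have Hinj : forall c : bool, injective (cons c) by move=> c' a b [].
  rewrite mem_cat eqSS -IH.
  case: c.
    rewrite (mem_map (Hinj true)).
    have -> : (true :: s \in [seq false :: i | i <- allb n]) = false by apply/mapP; case=> ? _ E; discriminate E.
    by rewrite orbF.
  rewrite (mem_map (Hinj false)).
  by have -> : (false :: s \in [seq true :: i | i <- allb n]) = false by apply/mapP; case=> ? _ E; discriminate E.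
Qed.

Lemma uniq_allb n : uniq (allb n).
Proof.
elim: n => [|n IH] //=.
rewrite cat_uniq !map_inj_uniq //; try by move=> a b [].
rewrite IH /= andbT.
by apply/hasPn => x /mapP [y _ ->]; apply/mapP; case=> ? _ E; discriminate E.
Qed.

Definition params (r T : nat) : seq (nat * seq bool) :=
  [seq (L, b) | L <- iota 0 T.+1, b <- [seq s <- allb (L + r.-1) | count id s == r.-1]].

Lemma mem_params r T L b : ((L, b) \in params r T) =
  [&& L <= T, size b == L + r.-1 & count id b == r.-1].
Proof.
apply/allpairsPdep/idP.
  move=> [L' [b' [HL Hb E]]]; case: E => -> ->.
  move: HL Hb; rewrite mem_iota mem_filter mem_allb => HL /andP[-> ->].
  by rewrite andbT; lia.
move=> /and3P [HL Hs Hc]; exists L, b; split => //.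
  by rewrite mem_iota; lia.
by rewrite mem_filter mem_allb Hs Hc.
Qed.

Lemma uniq_params r T : uniq (params r T).
Proof.
apply: allpairs_uniq_dep; first exact: iota_uniq.
  by move=> L _; apply: filter_uniq; exact: uniq_allb.
by move=> [L1 b1] [L2 b2] _ _ /= [E1 E2]; subst.
Qed.

Lemma count_negb b : count negb b = size b - count id b.
Proof. by rewrite -(count_predC id b) addKn. Qed.

Fixpoint RL (k r n : nat) : seq (seq nat) :=
  if n is n'.+1 then
    [seq newv (map succn vp) p.1 p.2 | vp <- RL k r n', p <- params r (Tk k vp)]
  else [:: [::]].

Lemma RL_mem k r n v : 2 < k -> 0 < r -> (v \in RL k r n) = validw n r k (rev v).
Proof.
move=> Hk Hr; elim: n v => [|n IH] v.
  case: v => [|x v].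
    rewrite inE eqxx; apply/esym/idP/(validw_rev _ _ _ (ltnW Hk)); split => //.
    - by move=> [a [b [c [_ _]]]].
    - by move=> [a [zs [_ _ _]]]; rewrite subseq0; case: zs.
  rewrite inE /=; apply/esym/negP => /(validw_rev _ _ _ (ltnW Hk)) [Hw _ _].
  by move: Hw => /andP[/andP[] ]; lia.
apply/idP/idP.
  move/allpairsPdep => [vp [[L b] [Hvp Hp ->]]].
  rewrite IH in Hvp; move: Hp; rewrite mem_params => /and3P [HL /eqP Hs /eqP Hc].
  apply: step_sound => //.
  by rewrite count_negb Hs Hc addnK.
move/step_complete => /(_ Hk Hr) [vp [L [b [Ev Hvp Hid Hb HL]]]].
apply/allpairsPdep; exists vp, (L, b); split => //.
  by rewrite IH.
rewrite mem_params HL Hid eqxx andbT /=.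
by rewrite -(count_predC id b) Hid -Hb addnC.
Qed.

Lemma split_uniq (x : nat) p1 q1 p2 q2 : x \notin q1 -> x \notin q2 ->
  p1 ++ x :: q1 = p2 ++ x :: q2 -> p1 = p2.
Proof.
move=> H1 H2; elim: p1 p2 => [|y p1 IH] [|z p2] //=.
- by case=> _ E; move: H1; rewrite E mem_cat inE eqxx orbT.
- by case=> _ E; move: H2; rewrite -E mem_cat inE eqxx orbT.
- by case=> -> /IH ->.
Qed.

Lemma RL_uniq k r n : 2 < k -> 0 < r -> uniq (RL k r n).
Proof.
move=> Hk Hr; elim: n => [|n IH] //=.
apply: allpairs_uniq_dep => //.
  by move=> vp _; exact: uniq_params.
move=> [vp1 [L1 b1]] [vp2 [L2 b2]] /allpairsPdep [vq1 [p1 [Hv1 Hp1 E1]]]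
  /allpairsPdep [vq2 [p2 [Hv2 Hp2 E2]]] /= E.
case: E1 => E1 E1'; subst vq1 p1.
case: E2 => E2 E2'; subst vq2 p2.
have Hw1 : validw n r k (rev vp1) by rewrite -RL_mem.
have Hw2 : validw n r k (rev vp2) by rewrite -RL_mem.
move: Hp1 Hp2; rewrite !mem_params => /and3P [HL1 /eqP Hs1 /eqP Hc1] /and3P [HL2 /eqP Hs2 /eqP Hc2].
have Hb1 : count negb b1 = L1 by rewrite count_negb Hs1 Hc1 addnK.
have Hb2 : count negb b2 = L2 by rewrite count_negb Hs2 Hc2 addnK.
have Hu1 : all (fun x => 1 < x) (map succn vp1).
  case/(validw_rev _ _ _ (ltnW Hk)): Hw1 => /is_word_pos H _ _.
  by rewrite all_map; apply: sub_all H.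
have Hu2 : all (fun x => 1 < x) (map succn vp2).
  case/(validw_rev _ _ _ (ltnW Hk)): Hw2 => /is_word_pos H _ _.
  by rewrite all_map; apply: sub_all H.
have HLs1 : L1 <= size (map succn vp1) by rewrite -Tk_succ in HL1; exact: leq_trans HL1 (Tk_size _ _).
have HLs2 : L2 <= size (map succn vp2) by rewrite -Tk_succ in HL2; exact: leq_trans HL2 (Tk_size _ _).
have Ev : vp1 = vp2.
  apply: (inj_map succn_inj).
  by rewrite -(filter_newv Hu1 Hb1 HLs1) -(filter_newv Hu2 Hb2 HLs2) E.
subst vp2.
set u := map succn vp1.
have Hnd : forall L, 1 \notin drop L u.
  by move=> L; apply/negP => /mem_drop H; have := allP Hu1 1 H.
have Esh := split_uniq (Hnd L1) (Hnd L2) E.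
have Hne : all (fun x => x != 1) u by apply: sub_all Hu1 => x; lia.
have Ht : forall L, all (fun x => x != 1) (take L u) by move=> L; case/andP: (all_drop_take L Hne).
have Eb : b1 = b2.
  rewrite -(@map_shuf b1 (take L1 u)) ?size_takel //.
  by rewrite Esh map_shuf // size_takel.
subst b2.
have EL : L1 = L2 by rewrite -Hb1 -Hb2.
by rewrite -EL.
Qed.

Fixpoint allS (j r : nat) : seq (seq nat) :=
  if j is j'.+1 then [::] :: [seq x :: s | x <- iota 0 r.+1, s <- allS j' r] else [:: [::]].

Lemma mem_allS j r s : size s <= j -> all (fun a => a <= r) s -> s \in allS j r.
Proof.
elim: j s => [|j IH] [|x s] // Hs /andP[Hx Ha].
have E : allS j.+1 r = [::] :: [seq y :: t | y <- iota 0 r.+1, t <- allS j r] by [].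
rewrite E in_cons; apply/orP; right; apply/allpairsPdep; exists x, s; split => //.
  by rewrite mem_iota; lia.
by apply: IH.
Qed.

Definition Sig k r := undup (allS (k - 2) r).

Lemma leadc_true b : leadc true b <= count id b.
Proof. by elim: b => [|x b IH] //=; case: x => /=; lia. Qed.

Lemma all_take' (P : pred nat) n s : all P s -> all P (take n s).
Proof. by move=> H; case/andP: (all_drop_take n H). Qed.

Lemma all_trunc r g S : all (fun a => a <= r) S -> all (fun a => a <= r) (trunc g S).
Proof.
elim: S g => [|a S IH] [|g] //= /andP[Ha HS].
case: ifP => H /=; first by rewrite andbT; lia.
by rewrite Ha IH.
Qed.

Lemma newst_bound k r b S : 0 < r -> count id b = r.-1 ->
  all (fun a => a <= r) S -> all (fun a => a <= r) (newst k b S).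
Proof.
move=> Hr Hb HS; rewrite /newst.
have Ht := leadc_true b.
case: ifP => _; apply: all_take' => /=.
  by rewrite HS andbT; lia.
case: ifP => _ /=; first exact: all_trunc.
by rewrite all_trunc // andbT; lia.
Qed.

Lemma params_facts r T L b : (L, b) \in params r T ->
  [/\ L <= T, count id b = r.-1 & count negb b = L].
Proof.
rewrite mem_params => /and3P [HL /eqP Hs /eqP Hc]; split => //.
by rewrite count_negb Hs Hc addnK.
Qed.

Lemma RL_facts k r n vp : 2 < k -> 0 < r -> vp \in RL k r n ->
  all (fun x => 1 < x) (map succn vp).
Proof.
move=> Hk Hr; rewrite RL_mem // => /(validw_rev _ _ _ (ltnW Hk)) [/is_word_pos H _ _].
by rewrite all_map; apply: sub_all H.
Qed.

Lemma stk_newv k r n vp L b : 2 < k -> 0 < r -> vp \in RL k r n ->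
  (L, b) \in params r (Tk k vp) ->
  stk k (newv (map succn vp) L b) = newst k b (stk k vp).
Proof.
move=> Hk Hr Hvp /params_facts [HL Hid Hb].
rewrite st_newv //; first by rewrite stk_succ.
  exact: RL_facts Hvp.
by rewrite Tk_succ.
Qed.

Lemma RL_state k r n v : 2 < k -> 0 < r -> v \in RL k r n -> stk k v \in Sig k r.
Proof.
move=> Hk Hr Hv; rewrite mem_undup; apply: mem_allS; first by rewrite size_take_min geq_minl.
elim: n v Hv => [|n IH] v.
  by rewrite inE => /eqP ->.
move/allpairsPdep => [vp [[L b] [Hvp Hp ->]]] /=.
rewrite (stk_newv Hk Hr Hvp Hp).
have [_ Hid _] := params_facts Hp.
exact: newst_bound Hr Hid (IH _ Hvp).
Qed.

Definition cnt k r n S := count (fun v => stk k v == S) (RL k r n).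
Definition Fm k r (S0 S : seq nat) := count (fun p => newst k p.2 S0 == S) (params r (sumn S0)).

Lemma count_allpairs_dep (S : eqType) (T : S -> eqType) (R : eqType)
  (f : forall x, T x -> R) (s : seq S) (t : forall x, seq (T x)) (P : pred R) :
  count P [seq f x y | x <- s, y <- t x] = \sum_(x <- s) count (fun y => P (f x y)) (t x).
Proof.
elim: s => [|a s IH]; first by rewrite big_nil.
by rewrite big_cons -IH /= count_cat count_map.
Qed.

Lemma cnt_step k r n S : 2 < k -> 0 < r ->
  cnt k r n.+1 S = \sum_(vp <- RL k r n) Fm k r (stk k vp) S.
Proof.
move=> Hk Hr; rewrite /cnt /= count_allpairs_dep big_seq [RHS]big_seq.
apply: eq_bigr => vp Hvp; rewrite /Fm.
apply: eq_in_count => -[L b] Hp /=.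
by rewrite (stk_newv Hk Hr Hvp Hp).
Qed.

Lemma sum_by_state (Sg : seq (seq nat)) (g : seq nat -> nat) (st : seq nat -> seq nat) (l : seq (seq nat)) :
  uniq Sg -> {in l, forall x, st x \in Sg} ->
  \sum_(x <- l) g (st x) = \sum_(S <- Sg) g S * count (fun x => st x == S) l.
Proof.
move=> HU; elim: l => [|a l IH] Hin.
  by rewrite big_nil big1 // => S _; rewrite muln0.
rewrite big_cons IH; last by move=> x Hx; apply: Hin; rewrite inE Hx orbT.
rewrite /=.
under [in RHS]eq_bigr do rewrite mulnDr.
rewrite big_split /=; congr (_ + _).
rewrite (bigD1_seq (st a)) //=; last by apply: Hin; rewrite inE eqxx.
rewrite eqxx muln1 big1 ?addn0 // => S HS.
by rewrite eq_sym (negbTE HS) muln0.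
Qed.

Lemma size_count_sum (s : seq nat) w : uniq s -> all (fun x => x \in s) w ->
  size w = \sum_(i <- s) count_mem i w.
Proof.
move=> Hs; elim: w => [|x w IH] /=.
  by rewrite big1.
move=> /andP[Hx Hw].
under eq_bigr do rewrite /= -[count _ _]/(count_mem _ w).
rewrite big_split /= -IH //.
rewrite (bigD1_seq x) //= eqxx big1 ?addn0 ?add1n // => i Hi.
by rewrite eq_sym (negbTE Hi).
Qed.

Lemma sum_const_seq (s : seq nat) c : \sum_(i <- s) c = size s * c.
Proof. by elim: s => [|x s IH]; rewrite ?big_nil ?big_cons ?IH ?mulSn. Qed.

Lemma c_seq_RL k r n : 2 < k -> 0 < r -> c_seq k r n = size (RL k r n).
Proof.
move=> Hk Hr.
rewrite /c_seq cardE.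
set f := fun t : (n * r).-tuple 'I_n.+1 => [seq nat_of_ord i | i <- t].
rewrite -(size_map f) -(size_map rev (RL k r n)).
apply: perm_size; apply: uniq_perm.
- rewrite map_inj_uniq ?enum_uniq //.
  by move=> t1 t2 /(inj_map (@ord_inj _)) /val_inj.
- by rewrite map_inj_uniq ?RL_uniq //; exact: (can_inj revK).
move=> w; rewrite -[w in RHS]revK (mem_map (can_inj revK)) RL_mem // revK.
apply/mapP/idP.
  by case=> t; rewrite mem_enum => Ht ->.
move=> Hw.
have [/andP[Ha Hc] _ _] := and3P Hw.
have Hsz : size w = n * r.
  rewrite (@size_count_sum (iota 1 n)) ?iota_uniq //; last first.
    by apply: sub_all Ha => x; rewrite mem_iota; lia.
  rewrite (eq_big_seq (fun _ => r)) ?sum_const_seq ?size_iota //.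
  by move=> i Hi; apply/eqP; apply: (allP Hc).
have Hf : map (@nat_of_ord _) (map (@inord n) w) = w.
  rewrite -map_comp; apply: map_id_in => x Hx /=; rewrite inordK //.
  by have := allP Ha x Hx; lia.
have Hs : size (map (@inord n) w) == n * r by rewrite size_map Hsz.
exists (Tuple Hs); last by rewrite /f /= Hf.
by rewrite mem_enum inE /= Hf.
Qed.

Unset Implicit Arguments.
Import GRing.Theory.
Local Open Scope ring_scope.

Lemma lin_rec (m : nat) (A : 'M[rat]_m) (v : nat -> 'cV[rat]_m) (c : nat -> rat) :
  (forall n, v n.+1 = A *m v n) -> (forall n, c n = \sum_(i < m) v n i 0) ->
  exists (d : nat) (a : nat -> rat), forall n : nat,
    c (n + d)%N = \sum_(i < d) a i * c (n + i)%N.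
Proof.
case: m A v c => [|m] A v c Hv Hc.
  by exists 0%N, (fun _ => 0) => n; rewrite big_ord0 Hc big_ord0.
set p := char_poly A.
have Hsz : size p = m.+2 := size_char_poly A.
have Hlead : p`_m.+1 = 1.
  by have := monicP (char_poly_monic A); rewrite /lead_coef -/p Hsz.
have CH := Cayley_Hamilton A.
have Hexp : horner_mx A p = \sum_(i < m.+2) p`_i *: A ^+ i.
  rewrite -{1}[p]coefK poly_def Hsz linear_sum /=; apply: eq_bigr => i _.
  by rewrite linearZ /= rmorphXn /= horner_mx_X.
have HAd : A ^+ m.+1 = - \sum_(i < m.+1) p`_i *: A ^+ i.
  move: CH; rewrite -/p Hexp big_ord_recr /= Hlead scale1r => /eqP.
  by rewrite addrC addr_eq0 => /eqP.
have Hvn : forall n i, v (n + i)%N = A ^+ i *m v n.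
  move=> n; elim=> [|i IH]; first by rewrite addn0 expr0 mul1mx.
  by rewrite addnS Hv IH exprS mulmxA mulmxE.
exists m.+1, (fun i => - p`_i) => n.
transitivity (\sum_(i < m.+1) - p`_i * \sum_(j < m.+1) (A ^+ i *m v n) j 0).
  rewrite Hc Hvn HAd mulNmx mulmx_suml.
  under eq_bigr do rewrite mxE summxE.
  rewrite sumrN exchange_big /= -sumrN.
  apply: eq_bigr => i _; rewrite mulNr mulr_sumr.
  by congr (- _); apply: eq_bigr => j _; rewrite -scalemxAl mxE.
by apply: eq_bigr => i _; rewrite Hc Hvn.
Qed.

Theorem mainTheorem3 (k r : nat) (hk : (3 <= k)%N) (hr : (1 <= r)%N) :
  exists (d N : nat) (a : nat -> rat),
    forall n : nat, (N <= n)%N ->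
      ((c_seq k r (n + d))%:R : rat) = \sum_(i < d) a i * (c_seq k r (n + i))%:R.
Proof.
have Hk : (2 < k)%N by [].
have Hr : (0 < r)%N by [].
set Sg := Sig k r.
have HU : uniq Sg := undup_uniq _.
have Hin : forall n, {in RL k r n, forall x, stk k x \in Sg}.
  by move=> n x Hx; apply: RL_state Hx.
pose v n : 'cV[rat]_(size Sg) := \col_(i < size Sg) (cnt k r n (nth [::] Sg i))%:R.
pose A : 'M[rat]_(size Sg) :=
  \matrix_(i < size Sg, j < size Sg) (Fm k r (nth [::] Sg j) (nth [::] Sg i))%:R.
have Hv : forall n, v n.+1 = A *m v n.
  move=> n; apply/matrixP => i j; rewrite !mxE.
  under [RHS]eq_bigr do rewrite !mxE.
  rewrite cnt_step //.
  rewrite (@sum_by_state Sg (fun S => Fm k r S (nth [::] Sg i)) (stk k)) //; try exact: (Hin n).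
  rewrite natr_sum (big_nth [::]) big_mkord; apply: eq_bigr => l _.
  by rewrite natrM.
have Hc : forall n, ((c_seq k r n)%:R : rat) = \sum_(i < size Sg) v n i 0.
  move=> n; rewrite c_seq_RL // -sum1_size.
  rewrite (@sum_by_state Sg (fun _ => 1%N) (stk k)) //; try exact: (Hin n).
  rewrite natr_sum (big_nth [::]) big_mkord; apply: eq_bigr => l _.
  by rewrite mul1n mxE.
have [d [a Ha]] := @lin_rec _ A v (fun n => (c_seq k r n)%:R) Hv Hc.
by exists d, 0%N, a => n _; exact: Ha.
Qed.
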